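(* Let $G$ be a $\lambda$-graph and $Q$ a query over $G$. Then $Q^{\Downarrow}$ is a bisimulation if and only if there exists a bisimulation on the nodes of $G$ containing $Q$.
   Context: A pre-$\lambda$-graph is a directed graph whose nodes are of four kinds: an application node $@(n_1,n_2)$ has exactly two children, its left child $n_1$ and its right child $n_2$; an abstraction node $\lambda(n)$ has exactly one child, its body $n$; a free variable node has no children and carries an atom $\mathrm{id}(n)$ from a fixed set of atoms, distinct free variable nodes carrying distinct atoms; a bound variable node $\mathrm{var}(l)$ has exactly one outgoing binding edge, to an abstraction node $l$ (its binder). A trace is a finite sequence of directions from $\{\swarrow,\downarrow,\searrow\}$; $\epsilon$ is the empty trace and $d\cdot\tau$ is the trace $\tau$ extended by one final step $d$. Paths $n\xrightarrow{\tau}m$ are defined inductively: $n\xrightarrow{\epsilon}n$; if $n\xrightarrow{\tau}\lambda(m)$ then $n\xrightarrow{\downarrow\cdot\tau}m$; if $n\xrightarrow{\tau}@(m_1,m_2)$ then $n\xrightarrow{\swarrow\cdot\tau}m_1$ and $n\xrightarrow{\searrow\cdot\tau}m_2$ (binding edges are never followed). The path $n\xrightarrow{\tau}$ crosses a node $m$ if either $n\xrightarrow{\tau}m$, or $\tau=d\cdot\tau'$ and $n\xrightarrow{\tau'}$ crosses $m$. A root is a node $r$ such that the only path ending in $r$ has the empty trace. A node $m$ dominates $n$ if every path from a root to $n$ crosses $m$. A $\lambda$-graph is a pre-$\lambda$-graph that has finitely many nodes, is acyclic ($n\xrightarrow{\tau}n$ holds only for $\tau=\epsilon$), and is dominated (every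 bound variable node $\mathrm{var}(l)$ is dominated by its binder $l$). Two nodes are homogeneous if both are application nodes, or both abstraction nodes, or both free variable nodes, or both bound variable nodes; a binary relation $R$ on nodes is homogeneous if it only relates homogeneous nodes. Rules: $(\swarrow)$: $@(n_1,n_2)\,R\,@(m_1,m_2)$ implies $n_1\,R\,m_1$; $(\searrow)$: $@(n_1,n_2)\,R\,@(m_1,m_2)$ implies $n_2\,R\,m_2$; $(\downarrow)$: $\lambda(n)\,R\,\lambda(m)$ implies $n\,R\,m$; $(\circlearrowright)$: $\mathrm{var}(n)\,R\,\mathrm{var}(m)$ implies $n\,R\,m$. $R$ is propagated if closed under $(\swarrow),(\downarrow),(\searrow)$. A bisimulation is a homogeneous propagated relation closed also under $(\circlearrowright)$. $R^{\Downarrow}$ (propagation) is the smallest propagated relation containing $R$. A query over $G$ is a binary relation on the roots of $G$. *)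

(* Defs.v *)
From mathcomp Require Import all_boot.
Set Implicit Arguments.
Unset Strict Implicit.
Unset Printing Implicit Defensive.

Inductive node_kind (V Atom : Type) : Type :=
| App : V -> V -> node_kind V Atom
| Abs : V -> node_kind V Atom
| FVar : Atom -> node_kind V Atom
| BVar : V -> node_kind V Atom.
Arguments App {V Atom}. Arguments Abs {V Atom}. Arguments FVar {V Atom}. Arguments BVar {V Atom}.

Section Graphs.
Variables (V : finType) (Atom : Type) (lab : V -> node_kind V Atom).

Definition is_abs (n : V) : Prop := exists m, lab n = Abs m.

Definition pre_lambda_graph : Prop :=
  (forall n l, lab n = BVar l -> is_abs l) /\
  (forall n m a b, lab n = FVar a -> lab m = FVar b -> a = b -> n = m).

Inductive dir := SW | DOWN | SE.

(* Traces: the head of the list is the LAST step, so d :: tau = d . tau. *)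
Definition trace := list dir.

Inductive path : V -> trace -> V -> Prop :=
| path_nil n : path n nil n
| path_down n tau m m' : path n tau m -> lab m = Abs m' -> path n (DOWN :: tau) m'
| path_sw n tau m m1 m2 : path n tau m -> lab m = App m1 m2 -> path n (SW :: tau) m1
| path_se n tau m m1 m2 : path n tau m -> lab m = App m1 m2 -> path n (SE :: tau) m2.

Fixpoint crosses (n : V) (tau : trace) (m : V) : Prop :=
  path n tau m \/
  match tau with
  | nil => False
  | _ :: tau' => crosses n tau' m
  end.

Definition is_root (r : V) : Prop := forall n tau, path n tau r -> tau = nil.

Definition dominates (m n : V) : Prop :=
  forall r tau, is_root r -> path r tau n -> crosses r tau m.

Definition acyclic : Prop := forall n tau, path n tau n -> tau = nil.

Definition dominated : Prop := forall n l, lab n = BVar l -> dominates l n.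

(* V is a finType, so the graph has finitely many nodes. *)
Definition lambda_graph : Prop := pre_lambda_graph /\ acyclic /\ dominated.

Definition homogeneous_nodes (n m : V) : Prop :=
  match lab n, lab m with
  | App _ _, App _ _ | Abs _, Abs _ | FVar _, FVar _ | BVar _, BVar _ => True
  | _, _ => False
  end.

Definition homogeneous (R : V -> V -> Prop) : Prop :=
  forall n m, R n m -> homogeneous_nodes n m.

Definition propagated (R : V -> V -> Prop) : Prop :=
  (forall n m n1 n2 m1 m2, R n m -> lab n = App n1 n2 -> lab m = App m1 m2 -> R n1 m1) /\
  (forall n m n' m', R n m -> lab n = Abs n' -> lab m = Abs m' -> R n' m') /\
  (forall n m n1 n2 m1 m2, R n m -> lab n = App n1 n2 -> lab m = App m1 m2 -> R n2 m2).

Definition binder_closed (R : V -> V -> Prop) : Prop :=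
  forall n m l l', R n m -> lab n = BVar l -> lab m = BVar l' -> R l l'.

Definition bisimulation (R : V -> V -> Prop) : Prop :=
  homogeneous R /\ propagated R /\ binder_closed R.

(* R^Downarrow: the smallest propagated relation containing R *)
Inductive propagation (R : V -> V -> Prop) : V -> V -> Prop :=
| prop_base n m : R n m -> propagation R n m
| prop_sw n m n1 n2 m1 m2 : propagation R n m -> lab n = App n1 n2 ->
    lab m = App m1 m2 -> propagation R n1 m1
| prop_down n m n' m' : propagation R n m -> lab n = Abs n' ->
    lab m = Abs m' -> propagation R n' m'
| prop_se n m n1 n2 m1 m2 : propagation R n m -> lab n = App n1 n2 ->
    lab m = App m1 m2 -> propagation R n2 m2.

Definition query (Q : V -> V -> Prop) : Prop :=
  forall n m, Q n m -> is_root n /\ is_root m.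

End Graphs.

(* Main.v *)
Require Import Defs.
From mathcomp Require Import all_boot.

Section Helpers.
Set Implicit Arguments.
Variables (Atom : Type) (V : finType) (lab : V -> node_kind V Atom).

Notation P := (Defs.path lab).

Lemma path_det n t m : P n t m -> forall m', P n t m' -> m = m'.
Proof.
  induction 1 as [n|n t m m' H IH E|n t m m1 m2 H IH E|n t m m1 m2 H IH E];
    intros z Hz; inversion Hz as [|? ? a ? Ha Ea|? ? a ? ? Ha Ea|? ? a ? ? Ha Ea]; subst; auto;
    rewrite (IH _ Ha) in E; rewrite E in Ea; congruence.
Qed.

Lemma path_cat n t1 k : P n t1 k -> forall t2 m, P k t2 m -> P n (t2 ++ t1) m.
Proof.
  intros H1 t2 m H2; induction H2; simpl; auto.
  - eapply path_down; eauto.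
  - eapply path_sw; eauto.
  - eapply path_se; eauto.
Qed.

Lemma path_split {t2} : forall {n t1 m}, P n (t2 ++ t1) m -> exists k, P n t1 k /\ P k t2 m.
Proof.
  induction t2 as [|d t2 IH]; intros n t1 m H; simpl in H.
  - exists m; split; auto; constructor.
  - inversion H; subst; destruct (IH _ _ _ H3) as [k [Hk1 Hk2]]; exists k; split; auto.
    + eapply path_down; eauto.
    + eapply path_sw; eauto.
    + eapply path_se; eauto.
Qed.

Lemma crosses_split n t m : crosses lab n t m -> exists s t', t = s ++ t' /\ P n t' m.
Proof.
  induction t as [|d t IH]; simpl; intros [H|H].
  - exists nil, nil; auto.
  - destruct H.
  - exists nil, (d :: t); auto.
  - destruct (IH H) as [s [t' [E H']]]; exists (d :: s), t'; subst; auto.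
Qed.

Lemma suffix_cmp (s1 s2 t1 t2 : trace) : s1 ++ t1 = s2 ++ t2 ->
  (size t1 <= size t2)%N -> exists r, t2 = r ++ t1.
Proof.
  revert s1; induction s2 as [|d s2 IH]; intros s1 E Hs; simpl in E.
  - exists s1; auto.
  - destruct s1 as [|e s1]; simpl in E.
    + subst t1. simpl in Hs. rewrite size_cat in Hs. exfalso.
      move: Hs; rewrite ltnNge leq_addl //.
    + injection E; intros E' _; eauto.
Qed.

Lemma sim R : homogeneous lab R -> propagated lab R ->
  forall x x' t, P x t x' -> forall y, R x y -> exists y', P y t y' /\ R x' y'.
Proof.
  intros Hh [Hsw [Hd Hse]] x x' t H; induction H as [n|n t m m' H IH E|n t m m1 m2 H IH E|n t m m1 m2 H IH E];
    intros y Hy.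
  - exists y; split; auto; constructor.
  - destruct (IH _ Hy) as [w [Hw Rw]]. have := Hh _ _ Rw. rewrite /homogeneous_nodes E.
    case Ew: (lab w) => [a b|a|a|a] //= _. exists a; split; [eapply path_down; eauto | eauto].
  - destruct (IH _ Hy) as [w [Hw Rw]]. have := Hh _ _ Rw. rewrite /homogeneous_nodes E.
    case Ew: (lab w) => [a b|a|a|a] //= _. exists a; split; [eapply path_sw; eauto | eauto].
  - destruct (IH _ Hy) as [w [Hw Rw]]. have := Hh _ _ Rw. rewrite /homogeneous_nodes E.
    case Ew: (lab w) => [a b|a|a|a] //= _. exists b; split; [eapply path_se; eauto | eauto].
Qed.

Lemma sim' R : homogeneous lab R -> propagated lab R ->
  forall y y' t, P y t y' -> forall x, R x y -> exists x', P x t x' /\ R x' y'.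
Proof.
  intros Hh [Hsw [Hd Hse]] y y' t H; induction H as [n|n t m m' H IH E|n t m m1 m2 H IH E|n t m m1 m2 H IH E];
    intros x Hx.
  - exists x; split; auto; constructor.
  - destruct (IH _ Hx) as [w [Hw Rw]]. have := Hh _ _ Rw. rewrite /homogeneous_nodes E.
    case Ew: (lab w) => [a b|a|a|a] //= _. exists a; split; [eapply path_down; eauto | eauto].
  - destruct (IH _ Hx) as [w [Hw Rw]]. have := Hh _ _ Rw. rewrite /homogeneous_nodes E.
    case Ew: (lab w) => [a b|a|a|a] //=; intros _. exists a; split; [eapply path_sw; eauto | eauto].
  - destruct (IH _ Hx) as [w [Hw Rw]]. have := Hh _ _ Rw. rewrite /homogeneous_nodes E.
    case Ew: (lab w) => [a b|a|a|a] //=; intros _. exists b; split; [eapply path_se; eauto | eauto].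
Qed.

Lemma path_short_step : acyclic lab -> forall n t d m',
  P n (d :: t) m' ->
  (exists s : seq V, size s = (size t).+1 /\ uniq s /\
    forall x, x \in s -> exists a b, t = a ++ b /\ P n b x) ->
  exists s : seq V, size s = (size (d :: t)).+1 /\ uniq s /\
    forall x, x \in s -> exists a b, d :: t = a ++ b /\ P n b x.
Proof.
  intros Hac n t d m' Hm [s [Hs [Hu Hx]]].
  exists (m' :: s); split; [simpl; rewrite Hs; auto|split].
  - simpl; rewrite Hu andbT; apply/negP => Hin.
    destruct (Hx _ Hin) as [a [b [Eab Hb]]].
    have Hp : P n ((d :: a) ++ b) m' by rewrite /= -Eab.
    destruct (path_split Hp) as [k [Hk1 Hk2]]. rewrite (path_det Hk1 Hb) in Hk2.
    by have := Hac _ _ Hk2.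
  - intros x; rewrite inE => /orP [/eqP ->|Hin].
    + exists nil, (d :: t); auto.
    + destruct (Hx _ Hin) as [a [b [Eab Hb]]]; exists (d :: a), b; subst; auto.
Qed.

Lemma path_short : acyclic lab -> forall n t m, P n t m ->
  exists s : seq V, size s = (size t).+1 /\ uniq s /\
    forall x, x \in s -> exists a b, t = a ++ b /\ P n b x.
Proof.
  intros Hac n t m H; induction H as [n|n t m m' H IH E|n t m m1 m2 H IH E|n t m m1 m2 H IH E].
  - exists [:: n]; repeat split; auto. intros x; rewrite inE => /eqP ->.
    exists nil, nil; split; auto; constructor.
  - eapply path_short_step; [exact Hac|eapply path_down; eauto|exact IH].
  - eapply path_short_step; [exact Hac|eapply path_sw; eauto|exact IH].
  - eapply path_short_step; [exact Hac|eapply path_se; eauto|exact IH].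
Qed.

Lemma path_len : acyclic lab -> forall n t m, P n t m -> (size t < #|V|)%N.
Proof.
  intros Hac n t m H. destruct (path_short Hac H) as [s [Hs [Hu _]]].
  have := uniq_leq_size Hu (s2 := enum V) (fun x _ => mem_enum V x).
  by rewrite Hs -cardE.
Qed.

Fixpoint rpow (r : trace) (k : nat) : trace :=
  match k with 0 => nil | k'.+1 => rpow r k' ++ r end.

Lemma size_rpow r k : size (rpow r k) = (k * size r)%N.
Proof. induction k; simpl; auto. rewrite size_cat IHk mulSn addnC //. Qed.

Lemma no_loop R : acyclic lab -> homogeneous lab R -> propagated lab R ->
  forall x y z r, r <> nil -> R x y -> R z y -> P x r z -> False.
Proof.
  intros Hac Hh Hp x y z r Hr Rxy Rzy Hxz.
  have Hk : forall k, exists w, P x (rpow r k) w.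
  { induction k as [|k [w Hw]]; simpl.
    - exists x; constructor.
    - destruct (sim Hh Hp Hw _ Rxy) as [w1 [Hw1 _]].
      destruct (sim' Hh Hp Hw1 _ Rzy) as [w2 [Hw2 _]].
      exists w2; eapply path_cat; eauto. }
  destruct (Hk #|V|) as [w Hw]. have := path_len Hac Hw.
  rewrite size_rpow. destruct r as [|d r]; [congruence|]. simpl.
  rewrite ltnNge => /negP; apply. by rewrite leq_pmulr.
Qed.

Lemma prop_sub Q R : propagated lab R -> (forall n m, Q n m -> R n m) ->
  forall n m, propagation lab Q n m -> R n m.
Proof.
  intros [Hsw [Hd Hse]] HQ n m H; induction H; eauto.
Qed.

Lemma prop_copath Q n m : propagation lab Q n m ->
  exists r r' t, Q r r' /\ P r t n /\ P r' t m.
Proof.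
  induction 1 as [n m H|n m n1 n2 m1 m2 H [r [r' [t [HQ [H1 H2]]]]] E1 E2
    |n m n' m' H [r [r' [t [HQ [H1 H2]]]]] E1 E2|n m n1 n2 m1 m2 H [r [r' [t [HQ [H1 H2]]]]] E1 E2].
  - exists n, m, nil; repeat split; auto; constructor.
  - exists r, r', (SW :: t); split; auto; split; eapply path_sw; eauto.
  - exists r, r', (DOWN :: t); split; auto; split; eapply path_down; eauto.
  - exists r, r', (SE :: t); split; auto; split; eapply path_se; eauto.
Qed.

Lemma copath_prop Q r r' t a : Q r r' -> P r t a -> forall b, P r' t b -> propagation lab Q a b.
Proof.
  intros HQ H; induction H as [n|n t m m' H IH E|n t m m1 m2 H IH E|n t m m1 m2 H IH E];
    intros b Hb; inversion Hb; subst.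
  - by apply prop_base.
  - eapply prop_down; eauto.
  - eapply prop_sw; eauto.
  - eapply prop_se; eauto.
Qed.

End Helpers.

Theorem mainTheorem10 (Atom : Type) (V : finType) (lab : V -> node_kind V Atom)
  (Q : V -> V -> Prop) :
  lambda_graph lab -> query lab Q ->
  (bisimulation lab (propagation lab Q) <->
   exists R : V -> V -> Prop, bisimulation lab R /\ (forall n m, Q n m -> R n m)).
Proof.
  intros [_ [Hac Hdom]] Hq; split.
  - intros Hb; exists (propagation lab Q); split; auto. intros; by apply prop_base.
  - intros [R [[Hh [Hp Hbc]] HQR]].
    have Hsub := prop_sub Hp HQR.
    split; [|split].
    + intros n m H; exact (Hh _ _ (Hsub _ _ H)).
    + split; [|split]; intros; [eapply prop_sw|eapply prop_down|eapply prop_se]; eauto.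
    + intros n m l l' H En Em.
      have Rll' := Hbc _ _ _ _ (Hsub _ _ H) En Em.
      destruct (prop_copath H) as [r [r' [t [HQ [H1 H2]]]]].
      destruct (Hq _ _ HQ) as [Rr Rr'].
      destruct (@crosses_split _ _ _ _ _ _ (Hdom _ _ En _ _ Rr H1)) as [s1 [t1 [E1 P1]]].
      destruct (@crosses_split _ _ _ _ _ _ (Hdom _ _ Em _ _ Rr' H2)) as [s2 [t2 [E2 P2]]].
      have E12 : s1 ++ t1 = s2 ++ t2 by rewrite -E1 -E2.
      case: (leqP (size t1) (size t2)) => Hs.
      * destruct (suffix_cmp _ _ _ _ E12 Hs) as [rr Er].
        rewrite E2 in H1. destruct (path_split H1) as [a [Ha _]].
        have Pal' : propagation lab Q a l' by eapply copath_prop; [exact HQ|exact Ha|exact P2].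
        rewrite Er in Ha. destruct (path_split Ha) as [k [Hk1 Hk2]].
        rewrite -(path_det P1 Hk1) in Hk2.
        destruct rr as [|d rr].
        -- simpl in Hk2. inversion Hk2; subst; auto.
        -- exfalso. have Hne : d :: rr <> nil by discriminate. exact (no_loop Hac Hh Hp _ Hne Rll' (Hsub _ _ Pal') Hk2).
      * have Hs' : (size t2 <= size t1)%N by apply ltnW.
        destruct (suffix_cmp _ _ _ _ (esym E12) Hs') as [rr Er].
        rewrite Er in P1. destruct (path_split P1) as [a [Ha Hal]].
        have Pal' : propagation lab Q a l' by eapply copath_prop; [exact HQ|exact Ha|exact P2].
        destruct rr as [|d rr].
        -- subst t1. rewrite ltnn in Hs. discriminate.
        -- exfalso. have Hne : d :: rr <> nil by discriminate. exact (no_loop Hac Hh Hp _ Hne (Hsub _ _ Pal') Rll' Hal).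
Qed.
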